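(* Let $X$ be a measurable space, $\mathcal{H}$ a Hilbert space and $\gamma:X\to\mathcal{H}$, $x\mapsto\gamma_x$. Assume that $\mathcal{H}_\gamma=\overline{\mathrm{span}}\{\gamma_x\in\mathcal{H}\mid x\in X\}$ is separable. Then the following conditions are equivalent: (1) the map $\gamma$ is weakly measurable, i.e. for every $v\in\mathcal{H}$ the function $A_\gamma v:X\to\mathbb{C}$, $(A_\gamma v)(x)=\langle v,\gamma_x\rangle_{\mathcal{H}}$, is measurable; (2) the map $\gamma$ is measurable from $X$ to $\mathcal{H}$; (3) the function $\Gamma:X\times X\to\mathbb{C}$, $\Gamma(x,t)=\langle\gamma_t,\gamma_x\rangle_{\mathcal{H}}$, is measurable; (4) for all $x\in X$, the function $\Gamma(x,\cdot)$ is measurable from $X$ into $\mathbb{C}$. If $X$ is endowed with a $\sigma$-finite measure $\mu$ and one of the conditions (1)–(4) holds, then $\mathrm{ran}\,A_\gamma\subset\mathcal{M}(X,\mu)$, the operator $A_\gamma$ is continuous from $\mathcal{H}$ into $\mathcal{M}(X,\mu)$, and $$\ker A_\gamma=\mathcal{H}_\mu^\perp,$$ where $\mathcal{S}=\{v\in\mathcal{H}\mid \mu(\gamma^{-1}(B(v,\varepsilon)))>0\ \forall\varepsilon>0\}$ (with $B(v,\varepsilon)=\{w\in\mathcal{H}\mid\|w-v\|_{\mathcal{H}}<\varepsilon\}$) is the essential range of $\gamma$ and $\mathcal{H}_\mu=\overline{\mathrm{span}}\,\mathcal{S}$.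
   Context: $\mathcal{M}(X,\mu)$ denotes the topological vector space of all measurable complex functions on $X$ (identified $\mu$-a.e.) endowed with the topology of convergence in measure on subsets of finite measure. The scalar product $\langle\cdot,\cdot\rangle_{\mathcal{H}}$ is linear in the first argument. *)

(* Defs.v *)
From HB Require Import structures.
From mathcomp Require Import all_boot all_order all_algebra.
From mathcomp Require Import all_classical all_reals all_analysis.
From mathcomp Require Import complex.
Import Order.TTheory GRing.Theory Num.Theory.
Import numFieldNormedType.Exports.

Set Implicit Arguments.
Unset Strict Implicit.
Unset Printing Implicit Defensive.

Local Open Scope ring_scope.
Local Open Scope classical_set_scope.

Definition Cplx (R : realType) : numClosedFieldType := R[i].

Definition RtoC (R : realType) (r : R) : Cplx R := (r%:C)%C.

Definition borelC (R : realType) := g_sigma_algebraType (@open (Cplx R)).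
Definition borelH (R : realType) (H : normedModType (Cplx R)) :=
  g_sigma_algebraType (@open H).

Definition Cmeasurable d (T : measurableType d) (R : realType) (f : T -> Cplx R) :=
  measurable_fun setT (f : T -> borelC R).

Definition Hmeasurable d (T : measurableType d) (R : realType)
    (H : normedModType (Cplx R)) (f : T -> H) :=
  measurable_fun setT (f : T -> borelH H).

(* Together with completeness of H
   (H : completeNormedModType) this makes H a complex Hilbert space. *)
Record is_inner_product (R : realType) (H : normedModType (Cplx R))
    (ip : H -> H -> Cplx R) : Prop := {
  ip_linear_l : forall (a : Cplx R) (u v w : H), ip (a *: u + v) w = a * ip u w + ip v w;
  ip_conj_sym : forall u v : H, ip u v = (ip v u)^*;
  ip_norm : forall u : H, ip u u = `|u| ^+ 2
}.

Definition span (R : realType) (H : normedModType (Cplx R)) (S : set H) : set H :=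
  [set v | exists n (c : 'I_n -> Cplx R) (s : 'I_n -> H),
     (forall i, S (s i)) /\ v = \sum_(i < n) c i *: s i].

Definition closed_span (R : realType) (H : normedModType (Cplx R)) (S : set H) : set H :=
  closure (span S).

Definition separable_set (R : realType) (H : normedModType (Cplx R)) (A : set H) :=
  exists D : set H, countable D /\ D `<=` A /\ A `<=` closure D.

Definition orthocomp (R : realType) (H : normedModType (Cplx R))
    (ip : H -> H -> Cplx R) (S : set H) : set H :=
  [set v | forall w, S w -> ip v w = 0].

Definition A_gamma (R : realType) (H : normedModType (Cplx R))
    (ip : H -> H -> Cplx R) (X : Type) (gamma : X -> H) (v : H) : X -> Cplx R :=
  fun x => ip v (gamma x).

Definition Gamma_ker (R : realType) (H : normedModType (Cplx R))
    (ip : H -> H -> Cplx R) (X : Type) (gamma : X -> H) : X * X -> Cplx R :=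
  fun p => ip (gamma p.2) (gamma p.1).

Definition ballH (R : realType) (H : normedModType (Cplx R)) (v : H) (eps : R) : set H :=
  [set w | `|w - v| < RtoC eps].

Definition ess_range d (X : measurableType d) (R : realType)
    (H : normedModType (Cplx R)) (mu : {measure set X -> \bar R}) (gamma : X -> H)
    : set H :=
  [set v | forall eps : R, 0 < eps ->
     (0 < mu (gamma @^-1` ballH v eps))%E].

Definition dev_set (X : Type) (R : realType) (E : set X) (f g : X -> Cplx R) (eps : R)
  : set X := E `&` [set x | RtoC eps < `|f x - g x|].

(* Continuity of a map A : H -> (functions X -> C) into M(X,mu), endowed with
   the topology of convergence in measure on subsets of finite measure: for
   every v, every measurable E of finite measure and every eps, delta > 0,
   there is eta > 0 with ||w - v|| < eta ->
   mu(E /\ {x | |A w x - A v x| > eps}) < delta. *)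
Definition continuous_in_measure d (X : measurableType d) (R : realType)
    (H : normedModType (Cplx R)) (mu : {measure set X -> \bar R})
    (A : H -> X -> Cplx R) :=
  forall (v : H) (E : set X) (eps delta : R),
    measurable E -> (mu E < +oo)%E -> 0 < eps -> 0 < delta ->
    exists2 eta : R, 0 < eta &
      forall w : H, `|w - v| < RtoC eta ->
        (mu (dev_set E (A w) (A v) eps) < delta%:E)%E.

(* Main.v *)
Require Import Defs.
From HB Require Import structures.
From mathcomp Require Import all_boot all_order all_algebra.
From mathcomp Require Import all_classical all_reals all_analysis.
From mathcomp Require Import complex.
From mathcomp Require Import ring lra.
Import Order.TTheory GRing.Theory Num.Theory.
Import numFieldNormedType.Exports.
Local Open Scope ring_scope.
Local Open Scope classical_set_scope.

Set Implicit Arguments.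
Unset Strict Implicit.

Section Hilb.
Variables (R : realType) (H : normedModType (Cplx R)) (ip : H -> H -> Cplx R).
Hypothesis ipP : is_inner_product ip.

Lemma ip0l w : ip 0 w = 0.
Proof.
have := ip_linear_l ipP 1 0 0 w; rewrite scale1r addr0 mul1r => h.
by apply: (addrI (ip 0 w)); rewrite addr0 -h.
Qed.

Lemma ipDl u v w : ip (u + v) w = ip u w + ip v w.
Proof. by have := ip_linear_l ipP 1 u v w; rewrite scale1r mul1r. Qed.

Lemma ipZl a u w : ip (a *: u) w = a * ip u w.
Proof. by have := ip_linear_l ipP a u 0 w; rewrite addr0 ip0l addr0. Qed.

Lemma ipNl u w : ip (- u) w = - ip u w.
Proof. by rewrite -scaleN1r ipZl mulN1r. Qed.

Lemma ipBl u v w : ip (u - v) w = ip u w - ip v w.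
Proof. by rewrite ipDl ipNl. Qed.

Lemma ip0r w : ip w 0 = 0.
Proof. by rewrite (ip_conj_sym ipP) ip0l conjC0. Qed.

Lemma ipDr u v w : ip w (u + v) = ip w u + ip w v.
Proof. by rewrite (ip_conj_sym ipP) ipDl rmorphD /= -!(ip_conj_sym ipP). Qed.

Lemma ipZr a u w : ip w (a *: u) = a^* * ip w u.
Proof. by rewrite (ip_conj_sym ipP) ipZl rmorphM /= -!(ip_conj_sym ipP). Qed.

Lemma ipNr u w : ip w (- u) = - ip w u.
Proof. by rewrite -scaleN1r ipZr rmorphN /= rmorph1 mulN1r. Qed.

Lemma ipBr u v w : ip w (u - v) = ip w u - ip w v.
Proof. by rewrite ipDr ipNr. Qed.

Lemma ipnn u : ip u u = `|u| ^+ 2.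
Proof. exact: (ip_norm ipP). Qed.

Lemma CS u v : `|ip u v| <= `|u| * `|v|.
Proof.
have [->|v0] := eqVneq v 0.
  by rewrite ip0r normr0 normr0 mulr0.
set a := ip u v; set b := ip v v.
have bE : b = `|v| ^+ 2 by rewrite /b ipnn.
have bgt0 : 0 < b by rewrite bE exprn_gt0 // normr_gt0.
set l := a / b.
have key : 0 <= ip (u - l *: v) (u - l *: v).
  by rewrite ipnn exprn_ge0.
have vuE : ip v u = a^* by rewrite /a (ip_conj_sym ipP).
rewrite ipBl !ipBr !ipZl !ipZr vuE -/b ipnn in key.
have bb : b^* = b by rewrite bE; apply/CrealP; rewrite rpredX // normr_real.
have lE : l^* = a^* / b by rewrite /l rmorphM fmorphV /= bb.
have : `|a| ^+ 2 <= `|u| ^+ 2 * `|v| ^+ 2.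
  have e : `|u| ^+ 2 - l^* * a - (l * a^* - l * (l^* * b)) = `|u| ^+ 2 - (a * a^*) / b.
    rewrite lE /l. field. by rewrite lt0r_neq0.
  rewrite e subr_ge0 ler_pdivrMr // in key.
  by rewrite sqr_normc -bE; exact: key.
by move=> h; rewrite -(@ler_pXn2r _ 2) ?nnegrE ?mulr_ge0 // exprMn.
Qed.

End Hilb.


Section Topo.
Variables (K : numFieldType) (V : normedModType K).

Lemma open_ballP (U : set V) y : open U -> U y ->
  exists2 e, 0 < e & forall z, `|y - z| < e -> U z.
Proof.
move=> oU Uy.
have : nbhs y U by apply: open_nbhs_nbhs; split.
move=> /nbhs_ballP [e e0 sub]; exists e => // z yz; apply: sub.
by rewrite -ball_normE /=.
Qed.

Lemma ballN_open (c : V) r : open [set z | `|c - z| < r].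
Proof. by have := ball_open c r; rewrite -ball_normE. Qed.

Lemma closure_normP (A : set V) y :
  closure A y <-> forall e, 0 < e -> exists z, A z /\ `|y - z| < e.
Proof.
split.
  move=> cl e e0; have nb : nbhs y (ball y e) by apply: nbhsx_ballx.
  have [z [Az byz]] := cl _ nb; exists z; split => //.
  by move: byz; rewrite -ball_normE.
move=> h B /nbhs_ballP [e e0 sub].
have [z [Az yz]] := h e e0; exists z; split => //; apply: sub.
by rewrite -ball_normE.
Qed.

End Topo.

Lemma archiC (R : realType) (e : Cplx R) : 0 < e -> exists k : nat, (k.+1%:R)^-1 < e.
Proof.
move=> e0.
have er : e \is Num.real by exact: gtr0_real.
rewrite -(RRe_real er) in e0 *.
set r := complex.Re e in e0 *.
rewrite ltcR in e0.
exists (Num.truncn r^-1).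
have h : (Num.truncn r^-1).+1%:R^-1 < r.
  by rewrite invf_plt ?posrE ?invr_gt0 // truncnS_gt.
have E : ((Num.truncn r^-1).+1%:R^-1 : R)%:C%C = ((Num.truncn r^-1).+1%:R : Cplx R)^-1.
  by rewrite fmorphV /= rmorph_nat.
by rewrite -E ltcR.
Qed.

Section Meas.
Context d (T : measurableType d).

Lemma meas_open (Y : ptopologicalType) (f : T -> g_sigma_algebraType (@open Y)) :
  (forall U : set Y, open U -> measurable (f @^-1` U)) -> measurable_fun setT f.
Proof.
move=> h; apply: (@measurability _ _ _ _ setT f (@open Y)) => //.
by move=> _ [B oB <-]; rewrite setTI; apply: h.
Qed.

Lemma bigcup_count_measurable (I : countType) (F : I -> set T) (P : set I) :
  (forall i, P i -> measurable (F i)) -> measurable (\bigcup_(i in P) F i).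
Proof.
move=> mF.
pose G (n : nat) : set T := match unpickle n with
  | Some i => if `[< P i >] then F i else set0 | None => set0 end.
have -> : \bigcup_(i in P) F i = \bigcup_n G n.
  apply/seteqP; split.
    move=> x [i Pi Fx]; exists (pickle i) => //.
    by rewrite /G pickleK; move/asboolT: Pi => ->.
  move=> x [n _]; rewrite /G; case: (unpickle n) => // i.
  by case: asboolP => // Pi Fx; exists i.
apply: bigcupT_measurable => n; rewrite /G; case: (unpickle n) => // i.
by case: asboolP => // /mF.
Qed.

End Meas.


Section Gen.
Variable R : realType.
Local Notation C := (Cplx R).

Definition rk (k : nat) : C := (k.+1%:R)^-1.

Lemma rk_gt0 k : 0 < rk k.
Proof. by rewrite /rk invr_gt0 ltr0Sn. Qed.

Lemma rk_half (e : C) : 0 < e -> exists k, rk k + rk k < e.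
Proof.
move=> e0; have [k hk] := @archiC R (e / 2) (divr_gt0 e0 (ltr0Sn _ _)).
exists k; rewrite [e]splitr; exact: ltrD.
Qed.

Lemma cont_eps (V W : normedModType C) (g : V -> W) :
  (forall x e, 0 < e -> exists2 dl, 0 < dl &
     forall y, `|x - y| < dl -> `|g x - g y| < e) -> continuous g.
Proof.
move=> h x A /nbhs_ballP [e e0 sub].
apply/nbhs_ballP; have [dl dl0 hd] := h x e e0.
exists dl => // y bxy; apply: sub; move: bxy; rewrite -!ball_normE /=.
exact: hd.
Qed.

Lemma preim_open_meas d (T : measurableType d) (Y : ptopologicalType)
  (f : T -> g_sigma_algebraType (@open Y)) (U : set Y) :
  measurable_fun setT f -> open U -> measurable (f @^-1` U).
Proof.
move=> mf oU; have := mf measurableT U (sub_sigma_algebra oU).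
by rewrite setTI.
Qed.

Lemma meas_comp_cont d (T : measurableType d) (Y Z : normedModType C)
  (f : T -> Y) (g : Y -> Z) :
  measurable_fun setT (f : T -> g_sigma_algebraType (@open Y)) ->
  continuous g ->
  measurable_fun setT ((g \o f) : T -> g_sigma_algebraType (@open Z)).
Proof.
move=> mf cg; apply: meas_open => U oU.
have oV : open (g @^-1` U) by move/continuousP : cg; apply.
exact: (preim_open_meas mf oV).
Qed.

Lemma G2 d (T : measurableType d) (Y1 Y2 Z : normedModType C)
  (f1 : T -> Y1) (f2 : T -> Y2) (s1 : nat -> Y1) (s2 : nat -> Y2)
  (phi : Y1 -> Y2 -> Z) :
  (forall x e, 0 < e -> exists n, `|f1 x - s1 n| < e) ->
  (forall x e, 0 < e -> exists n, `|f2 x - s2 n| < e) ->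
  (forall n k, measurable (f1 @^-1` [set y | `|s1 n - y| < rk k])) ->
  (forall n k, measurable (f2 @^-1` [set y | `|s2 n - y| < rk k])) ->
  (forall y z e, 0 < e -> exists2 dl, 0 < dl & forall y' z',
      `|y - y'| < dl -> `|z - z'| < dl -> `|phi y z - phi y' z'| < e) ->
  measurable_fun setT ((fun x => phi (f1 x) (f2 x)) : T -> g_sigma_algebraType (@open Z)).
Proof.
move=> d1 d2 m1 m2 cphi; apply: meas_open => U oU.
pose P (p : nat * nat * nat) := forall y' z', `|s1 p.1.1 - y'| < rk p.2 ->
  `|s2 p.1.2 - z'| < rk p.2 -> U (phi y' z').
pose F (p : nat * nat * nat) := f1 @^-1` [set y | `|s1 p.1.1 - y| < rk p.2] `&`
  f2 @^-1` [set y | `|s2 p.1.2 - y| < rk p.2].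
have -> : (fun x => phi (f1 x) (f2 x)) @^-1` U = \bigcup_(p in P) F p.
  apply/seteqP; split; last first.
    by move=> x [p Pp [/= h1 h2]]; exact: Pp.
  move=> x /= Ux.
  have [e e0 he] := open_ballP oU Ux.
  have [dl dl0 hdl] := cphi (f1 x) (f2 x) e e0.
  have [k hk] := rk_half dl0.
  have [n1 hn1] := d1 x _ (rk_gt0 k).
  have [n2 hn2] := d2 x _ (rk_gt0 k).
  exists (n1, n2, k); last by split; rewrite /= distrC.
  move=> y' z' /= hy hz; apply: he; apply: hdl.
    by apply: le_lt_trans (ler_distD (s1 n1) _ _) _; apply: lt_trans hk; exact: ltrD.
  by apply: le_lt_trans (ler_distD (s2 n2) _ _) _; apply: lt_trans hk; exact: ltrD.
apply: bigcup_count_measurable => p _; apply: measurableI; [exact: m1|exact: m2].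
Qed.

Definition cq (n : nat) : C :=
  match @unpickle (rat * rat)%type n with
  | Some (a, b) => ((ratr a) +i* (ratr b))%C
  | None => 0 end.

Lemma normc_small (x y a b e : R) : 0 < e -> `|x - a| < e / 2 -> `|y - b| < e / 2 ->
  `|((x +i* y)%C : C) - (a +i* b)%C| < e%:C%C.
Proof.
move=> e0 h1 h2.
rewrite normc_def /= ltcR -[e in _ < e]ger0_norm ?ltW // -sqrtr_sqr ltr_sqrt ?exprn_gt0 //.
move: h1 h2; rewrite !ltr_norml => /andP[h1 h1'] /andP[h2 h2'].
nra.
Qed.

Lemma cq_dense (z : C) e : 0 < e -> exists n, `|z - cq n| < e.
Proof.
move=> e0.
have er : e \is Num.real by exact: gtr0_real.
rewrite -(RRe_real er) in e0 *.
set r := complex.Re e in e0 *; rewrite ltcR in e0.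
case: z => x y.
have r2 : 0 < r / 2 by rewrite divr_gt0.
have lt1 : x - r / 2 < x + r / 2 by lra.
have lt2 : y - r / 2 < y + r / 2 by lra.
have [q1 hq1] := @rat_in_itvoo R _ _ lt1.
have [q2 hq2] := @rat_in_itvoo R _ _ lt2.
exists (pickle (q1, q2)); rewrite /cq pickleK.
apply: normc_small => //.
  move: hq1; rewrite in_itv /= => /andP[a1 a2]; rewrite ltr_norml; apply/andP; split; lra.
move: hq2; rewrite in_itv /= => /andP[a1 a2]; rewrite ltr_norml; apply/andP; split; lra.
Qed.

Lemma MF_add d (T : measurableType d) (f g : T -> C) :
  Cmeasurable f -> Cmeasurable g -> Cmeasurable (fun x => f x + g x).
Proof.
move=> mf mg.
apply: (@G2 _ _ C C C f g cq cq (fun a b => a + b)).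
- by move=> x e e0; exact: cq_dense.
- by move=> x e e0; exact: cq_dense.
- by move=> n k; apply: (preim_open_meas mf); exact: ballN_open.
- by move=> n k; apply: (preim_open_meas mg); exact: ballN_open.
move=> y z e e0; exists (e / 2); first by rewrite divr_gt0.
move=> y' z' h1 h2.
have -> : y + z - (y' + z') = (y - y') + (z - z') by rewrite opprD addrACA.
by apply: le_lt_trans (ler_normD _ _) _; rewrite [e]splitr; exact: ltrD.
Qed.

Lemma MF_comp d (T : measurableType d) (f : T -> C) (g : C -> C) :
  Cmeasurable f -> continuous g -> Cmeasurable (g \o f).
Proof. by move=> mf cg; exact: (@meas_comp_cont _ _ C C f g). Qed.

Lemma MF_cst d (T : measurableType d) (c : C) : Cmeasurable (fun _ : T => c).
Proof. exact: measurable_cst. Qed.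

Lemma conj_continuous : continuous (fun z : C => z^*).
Proof.
apply: cont_eps => x e e0; exists e => // y h.
by rewrite -rmorphB /= normcJ.
Qed.

Lemma MF_conj d (T : measurableType d) (f : T -> C) :
  Cmeasurable f -> Cmeasurable (fun x => (f x)^*).
Proof. by move=> mf; exact: (MF_comp mf conj_continuous). Qed.

Lemma MF_scale d (T : measurableType d) (c : C) (f : T -> C) :
  Cmeasurable f -> Cmeasurable (fun x => c * f x).
Proof.
move=> mf; apply: (MF_comp mf (g := fun z => c * z)).
move=> z; apply: continuousM; [exact: cst_continuous | exact: cvg_id].
Qed.

Lemma MF_sub d (T : measurableType d) (f g : T -> C) :
  Cmeasurable f -> Cmeasurable g -> Cmeasurable (fun x => f x - g x).
Proof.
move=> mf mg; apply: MF_add => //.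
have := MF_scale (-1) mg; apply: eq_measurable_fun => x _.
by rewrite mulN1r.
Qed.

End Gen.


Section Main.
Variables (R : realType) (H : completeNormedModType (Cplx R))
  (ip : H -> H -> Cplx R) (d : measure_display) (X : measurableType d)
  (gamma : X -> H).
Hypothesis ipP : is_inner_product ip.
Local Notation C := (Cplx R).

Lemma span0 (S : set H) : Defs.span S 0.
Proof.
exists 0%N, (fun _ => 0), (fun _ => 0); split; first by case.
by rewrite big_ord0.
Qed.

Lemma span_range x : Defs.span (range gamma) (gamma x).
Proof.
exists 1%N, (fun _ => 1), (fun _ => gamma x); split; first by move=> i; exists x.
by rewrite big_ord1 scale1r.
Qed.

Lemma dense_seq : separable_set (closed_span (range gamma)) ->
  exists dd : nat -> H, (forall n, Defs.span (range gamma) (dd n)) /\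
    (forall x e, 0 < e -> exists n, `|gamma x - dd n| < e).
Proof.
move=> [D [cD [DH HD]]].
have [d0 Dd0] : exists d0, D d0.
  have : closure D 0 by apply: HD; apply: subset_closure; exact: span0.
  by move/closure_normP => /(_ 1 ltr01) [z [Dz _]]; exists z.
have [f finj] := countable_injP D cD.
pose e n := xget d0 [set y | D y /\ f y = n].
have eK y : D y -> e (f y) = y.
  move=> Dy; have [De fe] : D (e (f y)) /\ f (e (f y)) = f y.
    exact: (@xgetI _ d0 [set z | D z /\ f z = f y] y (conj Dy erefl)).
  by apply: finj => //; rewrite inE.
pose P n k := [set s | Defs.span (range gamma) s /\ `|e n - s| < rk R k].
pose dd m := match @unpickle (nat * nat)%type m with
  | Some (n, k) => xget 0 (P n k) | None => 0 end.
exists dd; split.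
  move=> m; rewrite /dd; case: (unpickle m) => [[n k]|]; last exact: span0.
  have [ex|nex] := pselect (exists s, P n k s).
    by have [] := xgetPex 0 ex.
  by rewrite xgetPN; [exact: span0 | move=> s Ps; apply: nex; exists s].
move=> x eps eps0.
have [k hk] := rk_half eps0.
have : closure D (gamma x) by apply: HD; apply: subset_closure; exact: span_range.
move/closure_normP => /(_ _ (rk_gt0 R k)) [y [Dy hy]].
have : closure (Defs.span (range gamma)) y by exact: DH.
move/closure_normP => /(_ _ (rk_gt0 R k)) [s [ss hs]].
have Pex : exists s, P (f y) k s by exists s; split => //; rewrite eK.
exists (pickle (f y, k)); rewrite /dd pickleK.
have [_ h2] := xgetPex 0 Pex; rewrite eK // in h2.
apply: le_lt_trans (ler_distD y _ _) _; apply: lt_trans hk; exact: ltrD.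
Qed.


Lemma ip_sum_r w N (c : 'I_N -> C) (v : 'I_N -> H) :
  ip w (\sum_(i < N) c i *: v i) = \sum_(i < N) (c i)^* * ip w (v i).
Proof.
elim: N c v => [|N IH] c v; first by rewrite !big_ord0 (ip0r ipP).
by rewrite !big_ord_recr /= (ipDr ipP) (ipZr ipP); congr (_ + _); exact: IH.
Qed.

Lemma normH_le (z z' : H) : `|z'| <= `|z| + `|z - z'|.
Proof. by have := ler_normB z (z - z'); rewrite opprB addrC subrK. Qed.

Lemma rk_le1 k : rk R k <= 1.
Proof. by rewrite /rk invf_le1 ?ler1n ?ltr0Sn. Qed.

Lemma ip_cont2 (y z : H) (e : C) : 0 < e -> exists2 dl, 0 < dl &
  forall y' z', `|y - y'| < dl -> `|z - z'| < dl -> `|ip z y - ip z' y'| < e.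
Proof.
move=> e0.
set M := `|y| + `|z| + 1.
have M0 : 0 < M by rewrite /M ltr_wpDl ?addr_ge0 // ltr01.
have [k hk] := @archiC R (e / M) (divr_gt0 e0 M0).
exists (rk R k); first exact: rk_gt0.
move=> y' z' hy hz.
have E : ip z y - ip z' y' = ip (z - z') y + ip z' (y - y').
  by rewrite (ipBl ipP) (ipBr ipP) addrA subrK.
rewrite E; apply: le_lt_trans (ler_normD _ _) _.
have h1 : `|ip (z - z') y| <= rk R k * `|y|.
  exact: le_trans (CS ipP _ _) (ler_wpM2r (normr_ge0 _) (ltW hz)).
have hz' : `|z'| <= `|z| + 1.
  apply: le_trans (normH_le z z') _; apply: lerD => //.
  exact: le_trans (ltW hz) (rk_le1 k).
have h2 : `|ip z' (y - y')| <= (`|z| + 1) * rk R k.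
  apply: le_trans (CS ipP _ _) _.
  by apply: ler_pM => //; exact: ltW.
apply: le_lt_trans (lerD h1 h2) _.
have -> : rk R k * `|y| + (`|z| + 1) * rk R k = rk R k * M by rewrite /M; ring.
by rewrite -ltr_pdivlMr.
Qed.

Lemma open_gt_norm (V : normedModType C) (a : C) : open [set z : V | a < `|z|].
Proof.
rewrite openE => z /= az.
apply/nbhs_ballP; exists (`|z| - a); first by rewrite /= subr_gt0.
move=> w; rewrite -ball_normE /= => zw.
have h1 : `|z| - `|z - w| <= `|w|.
  by rewrite lerBlDr; have := ler_normD w (z - w); rewrite [w + _]addrC subrK.
have h2 : a < `|z| - `|z - w| by rewrite ltrBrDr addrC -ltrBrDr.
exact: lt_le_trans h2 h1.
Qed.

Lemma norm_le_test (u : H) (s : C) (E : nat -> H) : 0 <= s ->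
  (forall e, 0 < e -> exists m, `|u - E m| < e) ->
  (forall m, `|ip u (E m)| <= s * `|E m|) -> `|u| <= s.
Proof.
move=> s0 dE hE.
have key : forall e, 0 < e -> `|u| ^+ 2 <= s * (`|u| + e) + `|u| * e.
  move=> e e0; have [m hm] := dE e e0.
  have E1 : ip u u = ip u (E m) + ip u (u - E m) by rewrite (ipBr ipP) addrC subrK.
  have -> : `|u| ^+ 2 = `|ip u u| by rewrite (ipnn ipP) normrX normr_id.
  rewrite E1; apply: le_trans (ler_normD _ _) _; apply: lerD.
    apply: le_trans (hE m) _; apply: ler_wpM2l => //.
    have := normH_le u (E m); move/le_trans; apply.
    by apply: lerD => //; exact: ltW.
  apply: le_trans (CS ipP _ _) _; apply: ler_wpM2l => //; exact: ltW.
pose N := complex.Re `|u|; pose S := complex.Re s.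
have hu : `|u| = N%:C%C by rewrite /N RRe_real // ger0_real.
have hs : s = S%:C%C by rewrite /S RRe_real // ger0_real.
clearbody N S.
have N0 : 0 <= N by have := normr_ge0 u; rewrite hu (_ : 0 = 0%:C%C) // lecR.
have S0 : 0 <= S by move: s0; rewrite hs (_ : 0 = 0%:C%C) // lecR.
have keyR : forall t : R, 0 < t -> N ^+ 2 <= S * (N + t) + N * t.
  move=> t t0; have := key (t%:C%C); rewrite ltcR => /(_ t0).
  by rewrite hu hs -!rmorphD -!rmorphM -rmorphXn -rmorphD lecR.
have : N ^+ 2 <= S * N.
  apply/ler_addgt0Pr => t t0.
  set q := t / (S + N + 1).
  have q0 : 0 < q by rewrite divr_gt0 // ltr_wpDl ?addr_ge0 // ltr01.
  have qE : q * (S + N + 1) = t.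
    by rewrite /q mulrVK // unitfE gt_eqF // ltr_wpDl ?addr_ge0 // ltr01.
  have := keyR q q0; nra.
move=> h; rewrite hu hs lecR; nra.
Qed.

End Main.


Section Main2.
Variables (R : realType) (H : completeNormedModType (Cplx R))
  (ip : H -> H -> Cplx R) (d : measure_display) (X : measurableType d)
  (gamma : X -> H).
Hypothesis ipP : is_inner_product ip.
Local Notation C := (Cplx R).

Lemma L_ball_to_H (dd : nat -> H) :
  (forall x e, 0 < e -> exists n, `|gamma x - dd n| < e) ->
  (forall n k, measurable (gamma @^-1` [set y | `|dd n - y| < rk R k])) ->
  Hmeasurable gamma.
Proof.
move=> dn mb; apply: meas_open => U oU.
pose P (p : nat * nat) := [set y | `|dd p.1 - y| < rk R p.2] `<=` U.
have -> : gamma @^-1` U = \bigcup_(p in P) gamma @^-1` [set y | `|dd p.1 - y| < rk R p.2].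
  apply/seteqP; split; last by move=> x [p Pp /= h]; exact: Pp.
  move=> x /= Ux; have [e e0 he] := open_ballP oU Ux.
  have [k hk] := rk_half e0; have [n hn] := dn x _ (rk_gt0 R k).
  exists (n, k); last by rewrite /= distrC.
  move=> y /= hy; apply: he; apply: le_lt_trans (ler_distD (dd n) _ _) _.
  by apply: lt_trans hk; exact: ltrD.
by apply: bigcup_count_measurable => p _; exact: mb.
Qed.

Lemma L_rect (dd : nat -> H) :
  (forall x e, 0 < e -> exists n, `|gamma x - dd n| < e) ->
  (forall n k, measurable (gamma @^-1` [set y | `|dd n - y| < rk R k])) ->
  Cmeasurable (Gamma_ker ip gamma).
Proof.
move=> dn mb.
apply: (@G2 R _ (X * X)%type H H C (fun p => gamma p.1) (fun p => gamma p.2) dd dd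
  (fun y z => ip z y)).
- by move=> [x t] e e0; exact: dn.
- by move=> [x t] e e0; exact: dn.
- move=> n k.
  have -> : (fun p : X * X => gamma p.1) @^-1` [set y | `|dd n - y| < rk R k] =
    (gamma @^-1` [set y | `|dd n - y| < rk R k]) `*` setT.
    by apply/seteqP; split => [[x t]|[x t] []].
  exact: measurableX.
- move=> n k.
  have -> : (fun p : X * X => gamma p.2) @^-1` [set y | `|dd n - y| < rk R k] =
    setT `*` (gamma @^-1` [set y | `|dd n - y| < rk R k]).
    by apply/seteqP; split => [[x t]|[x t] []].
  exact: measurableX.
- by move=> y z e e0; exact: ip_cont2.
Qed.

Lemma L_W_to_H (dd : nat -> H) :
  (forall x e, 0 < e -> exists n, `|gamma x - dd n| < e) ->
  (forall n, Cmeasurable (fun t => ip (gamma t) (dd n))) ->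
  forall n k, measurable (gamma @^-1` [set y | `|dd n - y| < rk R k]).
Proof.
move=> dn W n k.
pose Em m := dd m - dd n.
pose g m t := ip (gamma t) (Em m) - ip (dd n) (Em m).
have gE m t : g m t = ip (gamma t - dd n) (Em m) by rewrite /g (ipBl ipP).
have mg m : Cmeasurable (g m).
  apply: MF_sub; last exact: MF_cst.
  have := MF_sub (W m) (W n); apply: eq_measurable_fun => t _.
  by rewrite /Em (ipBr ipP).
pose s j := rk R k - rk R j.
have -> : gamma @^-1` [set y | `|dd n - y| < rk R k] =
  \bigcup_(j in [set j | rk R j < rk R k])
     \bigcap_m ~` (g m @^-1` [set z | s j * `|Em m| < `|z|]).
  apply/seteqP; split.
  - move=> t /= ht.
    have pos : 0 < rk R k - `|dd n - gamma t| by rewrite subr_gt0.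
    have [j hj] := @archiC R _ pos.
    have hj' : `|dd n - gamma t| < s j by rewrite /s ltrBrDl addrC -ltrBrDl.
    exists j.
      rewrite /=; apply: lt_le_trans hj _; rewrite lerBlDr lerDl; exact: normr_ge0.
    move=> m _ /=; rewrite gE; apply/negP; rewrite le_gtF //.
    apply: le_trans (CS ipP _ _) _; apply: ler_wpM2r => //.
    by rewrite distrC; exact: ltW.
  - move=> t [j /= hj hall].
    have sj0 : 0 <= s j by rewrite subr_ge0 ltW.
    have hle : `|gamma t - dd n| <= s j.
      apply: (norm_le_test ipP (E := Em)) => //.
        move=> e e0; have [m hm] := dn t e e0; exists m.
        by rewrite /Em opprB addrA subrK.
      move=> m; have := hall m I; rewrite /= gE => /negP.
      by rewrite real_leNgt ?realM ?ger0_real.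
    rewrite /= distrC; apply: le_lt_trans hle _.
    by rewrite /s ltrBlDr ltrDl rk_gt0.
apply: bigcup_measurable => j _; apply: bigcapT_measurable => m.
apply: measurableC; exact: (preim_open_meas (mg m) (open_gt_norm _ _)).
Qed.

End Main2.


Section Main3.
Variables (R : realType) (H : completeNormedModType (Cplx R))
  (ip : H -> H -> Cplx R) (d : measure_display) (X : measurableType d)
  (gamma : X -> H).
Hypothesis ipP : is_inner_product ip.
Hypothesis sep : separable_set (closed_span (range gamma)).
Local Notation C := (Cplx R).

Lemma MF_sum N (F : 'I_N -> X -> C) :
  (forall i, Cmeasurable (F i)) -> Cmeasurable (fun t => \sum_(i < N) F i t).
Proof.
elim: N F => [|N IH] F mF.
  by have := @MF_cst R _ X (0 : C); apply: eq_measurable_fun => t _; rewrite big_ord0.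
have := MF_add (IH (fun i => F (widen_ord (leqnSn N) i)) (fun i => mF _)) (mF ord_max).
by apply: eq_measurable_fun => t _; rewrite big_ord_recr.
Qed.

Lemma ip_ball_meas (v : H) (r : C) :
  Hmeasurable gamma -> measurable (gamma @^-1` [set y | `|v - y| < r]).
Proof. by move=> mg; exact: (preim_open_meas mg (ballN_open _ _)). Qed.

Lemma c2_c1 : Hmeasurable gamma -> forall v, Cmeasurable (A_gamma ip gamma v).
Proof.
move=> mg v.
apply: (@meas_comp_cont R _ X H C gamma (ip v) mg).
apply: cont_eps => y e e0.
have [dl dl0 hdl] := ip_cont2 ipP y v e0.
exists dl => // y' hy; apply: hdl => //; by rewrite subrr normr0.
Qed.

Lemma c1_c2 : (forall v, Cmeasurable (A_gamma ip gamma v)) -> Hmeasurable gamma.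
Proof.
move=> c1; have [dd [_ dn]] := dense_seq sep.
apply: (L_ball_to_H dn); apply: (L_W_to_H ipP dn) => n.
have := MF_conj (c1 (dd n)); apply: eq_measurable_fun => t _.
by rewrite /A_gamma -(ip_conj_sym ipP).
Qed.

Lemma c2_c3 : Hmeasurable gamma -> Cmeasurable (Gamma_ker ip gamma).
Proof.
move=> mg; have [dd [_ dn]] := dense_seq sep.
apply: (L_rect ipP dn) => n k; exact: ip_ball_meas.
Qed.

Lemma c3_c4 : Cmeasurable (Gamma_ker ip gamma) ->
  forall x, Cmeasurable (fun t => Gamma_ker ip gamma (x, t)).
Proof. by move=> c3 x; exact: (measurableT_comp c3 (pair1_measurable x)). Qed.

Lemma c4_c2 : (forall x, Cmeasurable (fun t => Gamma_ker ip gamma (x, t))) ->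
  Hmeasurable gamma.
Proof.
move=> c4; have [dd [dspan dn]] := dense_seq sep.
apply: (L_ball_to_H dn); apply: (L_W_to_H ipP dn) => n.
have [N [c [s [hs ->]]]] := dspan n.
have mS : Cmeasurable (fun t => \sum_(i < N) (c i)^* * ip (gamma t) (s i)).
  apply: (@MF_sum N (fun i t => (c i)^* * ip (gamma t) (s i))) => i.
  apply: MF_scale; have [x _ hx] := hs i; rewrite -hx; exact: c4.
by move: mS; apply: eq_measurable_fun => t _; rewrite (ip_sum_r ipP).
Qed.

End Main3.


Section Main4.
Variables (R : realType) (H : completeNormedModType (Cplx R))
  (ip : H -> H -> Cplx R) (d : measure_display) (X : measurableType d)
  (gamma : X -> H).
Hypothesis ipP : is_inner_product ip.
Hypothesis sep : separable_set (closed_span (range gamma)).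
Variable mu : {measure set X -> \bar R}.
Hypothesis mg : Hmeasurable gamma.
Local Notation C := (Cplx R).

Lemma archiN (c : C) : 0 <= c -> exists n : nat, c < n%:R.
Proof.
move=> c0; have cr : c \is Num.real by exact: ger0_real.
rewrite -(RRe_real cr); exists (Num.truncn (complex.Re c)).+1.
have -> : ((Num.truncn (complex.Re c)).+1%:R : C) =
  ((Num.truncn (complex.Re c)).+1%:R : R)%:C%C by rewrite rmorph_nat.
by rewrite ltcR truncnS_gt.
Qed.

Lemma cont_meas : continuous_in_measure mu (A_gamma ip gamma).
Proof.
move=> v E eps delta mE muE eps0 delta0.
pose G (n : nat) := E `&` gamma @^-1` [set y | (n%:R : C) < `|y|].
have mG n : measurable (G n).
  by apply: measurableI mE _; exact: (preim_open_meas mg (open_gt_norm _ _)).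
have nonincr : nonincreasing_seq G.
  apply/nonincreasing_seqP => n; apply/subsetPset => x [Ex /= hx]; split => //.
  by apply: le_lt_trans hx; rewrite ler_nat.
have cap0 : \bigcap_n G n = set0.
  apply/seteqP; split => // x hx.
  have [n hn] := archiN (normr_ge0 (gamma x)).
  have [_ /= hn'] := hx n I.
  by have := lt_trans hn hn'; rewrite ltxx.
have G0 : (mu (G 0%N) < +oo)%E.
  apply: le_lt_trans muE; apply: le_measure; rewrite ?inE //.
  by move=> x [].
have := nonincreasing_cvg_mu G0 mG (bigcapT_measurable mG) nonincr.
rewrite cap0 measure0 => cvg0.
have nb : nbhs (0%R%:E : \bar R) [set y | (y < delta%:E)%E].
  exact: (@nbhs_open_ereal_lt R 0 (fun _ => delta)).
have [N _ hN] := cvg0 _ nb.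
have hNN := hN N (leqnn N); rewrite /= in hNN.
exists (eps / N.+1%:R); first by rewrite divr_gt0.
move=> w hw.
apply: le_lt_trans hNN.
have mf : Cmeasurable (fun x => A_gamma ip gamma w x - A_gamma ip gamma v x).
  exact: MF_sub (c2_c1 ipP mg w) (c2_c1 ipP mg v).
apply: le_measure; rewrite ?inE //.
  by apply: measurableI mE _; exact: (preim_open_meas mf (open_gt_norm _ _)).
move=> x [Ex hx]; split => //=.
rewrite real_ltNge ?ger0_real //; apply/negP => hle.
move: hx => /=; rewrite /A_gamma -(ipBl ipP).
have h1 : `|ip (w - v) (gamma x)| <= (eps / N.+1%:R)%:C%C * N%:R.
  apply: le_trans (CS ipP _ _) _; apply: ler_pM => //; exact: ltW.
have h2 : (eps / N.+1%:R)%:C%C * N%:R < RtoC eps.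
  rewrite /RtoC -(rmorph_nat (real_complex R)) -rmorphM ltcR.
  by rewrite mulrAC ltr_pdivrMr // ltr_pM2l // ltr_nat.
move=> h3; have := lt_trans (le_lt_trans h1 h2) h3; by rewrite ltxx.
Qed.

End Main4.


Section Main5.
Variables (R : realType) (H : completeNormedModType (Cplx R))
  (ip : H -> H -> Cplx R) (d : measure_display) (X : measurableType d)
  (gamma : X -> H).
Hypothesis ipP : is_inner_product ip.
Hypothesis sep : separable_set (closed_span (range gamma)).
Variable mu : {measure set X -> \bar R}.
Hypothesis mg : Hmeasurable gamma.
Local Notation C := (Cplx R).

Lemma ip_bound (v w z : H) (r : C) : ip v z = 0 -> `|w - z| < r ->
  `|ip v w| < r * (`|v| + 1).
Proof.
move=> vz wz.
have r0 : 0 < r by apply: le_lt_trans wz.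
have -> : ip v w = ip v (w - z) by rewrite (ipBr ipP) vz subr0.
apply: le_lt_trans (CS ipP _ _) _.
apply: le_lt_trans (ler_wpM2l (normr_ge0 v) (ltW wz)) _.
by rewrite mulrC ltr_pM2l // ltrDl ltr01.
Qed.

Lemma choose_r (a : C) (v : H) : 0 < a ->
  exists k, rk R k * (`|v| + 1) < a.
Proof.
move=> a0.
have v1 : 0 < `|v| + 1 by rewrite ltr_wpDl // ltr01.
have [k hk] := @archiC R (a / (`|v| + 1)) (divr_gt0 a0 v1).
by exists k; rewrite -ltr_pdivlMr.
Qed.

Lemma orth_closure (v : H) (S : set H) :
  (forall z, S z -> ip v z = 0) -> forall w, closure S w -> ip v w = 0.
Proof.
move=> hS w cw; have [//|ne] := eqVneq (ip v w) 0.
have a0 : 0 < `|ip v w| by rewrite normr_gt0.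
have [k hk] := choose_r v a0.
have [z [Sz hz]] := (closure_normP _ _).1 cw _ (rk_gt0 R k).
have := lt_trans (ip_bound (hS z Sz) hz) hk; by rewrite ltxx.
Qed.

Lemma rkE k : rk R k = ((k.+1%:R : R)^-1)%:C%C.
Proof. by rewrite /rk fmorphV /= rmorph_nat. Qed.

Lemma span1 (S : set H) w : S w -> Defs.span S w.
Proof.
move=> Sw; exists 1%N, (fun _ => 1), (fun _ => w); split => //.
by rewrite big_ord1 scale1r.
Qed.

Lemma ballH_meas (w : H) (eps : R) : measurable (gamma @^-1` ballH w eps).
Proof.
have -> : ballH w eps = [set y | `|w - y| < RtoC eps].
  by apply/seteqP; split => y; rewrite /ballH /= distrC.
exact: (preim_open_meas mg (ballN_open _ _)).
Qed.

Lemma ker_sub : [set v | {ae mu, forall x, A_gamma ip gamma v x = 0}] `<=`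
  orthocomp ip (closed_span (ess_range mu gamma)).
Proof.
move=> v /= hv.
case: hv => N [mN muN sub].
have step1 : forall w, ess_range mu gamma w -> ip v w = 0.
  move=> w hw; have [//|ne] := eqVneq (ip v w) 0.
  have a0 : 0 < `|ip v w| by rewrite normr_gt0.
  have [k hk] := choose_r v a0.
  have eps0 : 0 < ((k.+1%:R : R)^-1) by rewrite invr_gt0.
  have hpos := hw _ eps0.
  have mB := ballH_meas w (k.+1%:R^-1).
  have [x [Bx nNx]] : exists x, (gamma @^-1` ballH w (k.+1%:R^-1)) x /\ ~ N x.
    apply: contrapT => nex.
    have sBN : gamma @^-1` ballH w (k.+1%:R^-1) `<=` N.
      by move=> x Bx; apply: contrapT => nN; apply: nex; exists x.
    have := le_measure mu (mem_set mB) (mem_set mN) sBN.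
    have muN2 : mu N = 0%E := muN.
    have le0 : (mu N <= 0)%E by rewrite muN2.
    move=> h; have := le_trans h le0; rewrite leNgt; by rewrite hpos.
  have Ax : ip v (gamma x) = 0.
    by apply: contrapT => h; apply: nNx; apply: sub; exact: h.
  have hwx : `|w - gamma x| < rk R k by rewrite rkE distrC.
  by have := lt_trans (ip_bound Ax hwx) hk; rewrite ltxx.
have step2 : forall z, Defs.span (ess_range mu gamma) z -> ip v z = 0.
  move=> z [n [c [s [hs ->]]]]; rewrite (ip_sum_r ipP) big1 // => i _.
  by rewrite step1 // mulr0.
by move=> w cw; exact: (orth_closure step2 cw).
Qed.

Lemma ker_sup : orthocomp ip (closed_span (ess_range mu gamma)) `<=`
  [set v | {ae mu, forall x, A_gamma ip gamma v x = 0}].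
Proof.
move=> v hv /=.
have step1 : forall w, ess_range mu gamma w -> ip v w = 0.
  by move=> w hw; apply: hv; apply: subset_closure; exact: span1.
have [dd [_ dn]] := dense_seq sep.
pose B n k := gamma @^-1` [set y | `|dd n - y| < rk R k].
have mBnk n k : measurable (B n k) by exact: (preim_open_meas mg (ballN_open _ _)).
pose F m := match @unpickle (nat * nat)%type m with
  | Some (n, k) => if `[< mu (B n k) = 0%E >] then B n k else set0
  | None => set0 end.
have negF m : mu.-negligible (F m).
  rewrite /F; case: (unpickle m) => [[n k]|]; last exact: negligible_set0.
  case: asboolP => h; last exact: negligible_set0.
  by exists (B n k); split.
apply: (negligibleS _ (negligible_bigcup negF)).
move=> x /= nx.
have ngx : ~ ess_range mu gamma (gamma x) by move=> h; apply: nx; exact: step1.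
have [eps [eps0 meps]] : exists eps : R, 0 < eps /\
    mu (gamma @^-1` ballH (gamma x) eps) = 0%E.
  apply: contrapT => ne; apply: ngx => eps eps0.
  have := measure_ge0 mu (gamma @^-1` ballH (gamma x) eps).
  rewrite le_eqVlt => /orP[/eqP h|//].
  by exfalso; apply: ne; exists eps; split => //; rewrite -h.
have eC : 0 < (eps%:C%C : C) by rewrite ltcR.
have [k hk] := rk_half eC.
have [n hn] := dn x _ (rk_gt0 R k).
have Bsub : B n k `<=` gamma @^-1` ballH (gamma x) eps.
  move=> y /= hy; rewrite /ballH /RtoC /=.
  apply: le_lt_trans (ler_distD (dd n) _ _) _; apply: lt_trans hk.
  by apply: ltrD => //; rewrite distrC.
have muB0 : mu (B n k) = 0%E.
  apply/eqP; rewrite eq_le measure_ge0 andbT -meps.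
  by apply: le_measure; rewrite ?inE //; exact: ballH_meas.
exists (pickle (n, k)) => //; rewrite /F pickleK.
case: asboolP => // _; by rewrite /B /= distrC.
Qed.

End Main5.


Unset Implicit Arguments.
Set Strict Implicit.

Theorem proposition2 (R : realType) (H : completeNormedModType (Cplx R))
    (ip : H -> H -> Cplx R) (d : measure_display) (X : measurableType d)
    (gamma : X -> H) :
  is_inner_product ip ->
  separable_set (closed_span (range gamma)) ->
  let c1 := forall v : H, Cmeasurable (A_gamma ip gamma v) in
  let c2 := Hmeasurable gamma in
  let c3 := Cmeasurable (Gamma_ker ip gamma) in
  let c4 := forall x : X, Cmeasurable (fun t : X => Gamma_ker ip gamma (x, t)) in
  ((c1 <-> c2) /\ (c2 <-> c3) /\ (c3 <-> c4)) /\
  (forall mu : {measure set X -> \bar R}, sigma_finite setT mu ->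
     (c1 \/ c2 \/ c3 \/ c4) ->
     (forall v : H, Cmeasurable (A_gamma ip gamma v)) /\
     continuous_in_measure mu (A_gamma ip gamma) /\
     [set v : H | {ae mu, forall x, A_gamma ip gamma v x = 0}] =
       orthocomp ip (closed_span (ess_range mu gamma))).
Proof.
move=> ipP sep c1 c2 c3 c4.
have h12 : c1 -> c2 := c1_c2 ipP sep.
have h21 : c2 -> c1 := c2_c1 ipP.
have h23 : c2 -> c3 := c2_c3 ipP sep.
have h34 : c3 -> c4 := @c3_c4 R H ip d X gamma.
have h42 : c4 -> c2 := c4_c2 ipP sep.
split.
  split; first by split; [exact: h12 | exact: h21].
  split; split.
  - exact: h23.
  - by move=> /h34 /h42.
  - exact: h34.
  - by move=> /h42 /h23.
move=> mu _ hc.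
have mg : c2.
  by case: hc => [/h12 //|[//|[/h34 /h42 //|/h42 //]]].
split; first exact: h21 mg.
split; first exact: (@cont_meas _ _ _ _ _ _ ipP mu mg).
apply/seteqP; split; [exact: (@ker_sub _ _ _ _ _ _ ipP mu mg) | exact: (@ker_sup _ _ ip _ _ _ sep mu mg)].
Qed.
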